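(* Let $p$ be a prime, and let $K=\{k_1<k_2<\cdots<k_r\}$ and $L=\{l_1,\ldots,l_s\}$ be disjoint subsets of $\{0,1,\ldots,p-1\}$. Let $\mathcal{A}$ be a family of distinct subsets of $[n]$ with $|A|\pmod p\in K$ for all $A\in\mathcal{A}$ and $|A\cap B|\pmod p\in L$ for all distinct $A,B\in\mathcal{A}$. Suppose that $s+k_r\le n\le 2s-2r$ and $p+k_1-1\le (s-2r+1)+k_r$. Then \[ |\mathcal{A}|\le r\binom{n}{s}\le \binom{n}{s}+\binom{n}{s-2}+\cdots+\binom{n}{s-2r+2}=\binom{n-1}{s}+\binom{n-1}{s-1}+\cdots+\binom{n-1}{s-2r+1}. \] *)

(* Defs.v *)
From mathcomp Require Import all_boot.
Set Implicit Arguments. Unset Strict Implicit. Unset Printing Implicit Defensive.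

(* Main.v *)
Require Import Defs.
From mathcomp Require Import all_boot.
From mathcomp Require Import all_boot zify.
Set Implicit Arguments. Unset Strict Implicit. Unset Printing Implicit Defensive.

Lemma arith g h u a b c e : g*c <= u*e -> h+u <= b -> g <= a -> a*c = b*e -> 0<e -> g+h <= maxn a b.
Proof.
move=> H1 H2 H3 H4 H5.
case: (leqP a b) => Hab.
  have Hgu : g <= u.
    case: (posnP a) => [a0|apos].
      by move: H3; rewrite a0 leqn0 => /eqP ->.
    have Hce : e <= c.
      by rewrite -(leq_pmul2l apos) H4 leq_mul2r Hab orbT.
    rewrite -(leq_pmul2r H5); apply: leq_trans H1; exact: leq_mul.
  lia.
  have Hau : g * b <= a * u.
    rewrite -(leq_pmul2r H5).
    have -> : g * b * e = g * c * a by rewrite -mulnA -H4 mulnC; lia.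
    by rewrite mulnC -mulnA leq_mul2l H1 orbT.
  nia.
Qed.

Lemma bin_step n j : j.*2.+1 <= n -> 'C(n,j) <= 'C(n,j.+1).
Proof.
move=> Hj.
have := mul_bin_left n j => E.
rewrite -(leq_pmul2l (ltn0Sn j)) E leq_mul2r; apply/orP; right; lia.
Qed.

Lemma bin_mono n a b : a <= b -> b.*2 <= n -> 'C(n,a) <= 'C(n,b).
Proof.
elim: b => [|b IH] Hab Hb.
  by move: Hab; rewrite leqn0 => /eqP ->.
case: (eqVneq a b.+1) => [->//|Hne].
have Hab' : a <= b by move: Hab Hne; rewrite leq_eqVlt => /orP[/eqP->|]; [rewrite eqxx|].
apply: leq_trans (IH Hab' _) (bin_step _); lia.
Qed.

Lemma bin_le n a b : a <= b -> b <= n - a -> 'C(n,a) <= 'C(n,b).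
Proof.
move=> Hab Hb.
case: (leqP b.*2 n) => H2; first exact: bin_mono.
have Hbn : b <= n by lia.
rewrite -(bin_sub Hbn); apply: bin_mono; lia.
Qed.

Lemma pascal_sum n s t : 0 < n -> t.*2 <= s ->
  \sum_(i < t) 'C(n, s - 2*i) = \sum_(j < 2*t) 'C(n.-1, s - j).
Proof.
case: n => [//|n] _ /=.
elim: t => [|t IH] Ht; first by rewrite !big_ord0.
have -> : 2 * t.+1 = (2*t).+2 by lia.
rewrite big_ord_recr /= !big_ord_recr /= IH; last by lia.
rewrite -addnA; congr (_ + _).
have -> : s - 2 * t = (s - (2*t).+1).+1 by lia.
rewrite binS; congr (_ + _); congr 'C(_, _); lia.
Qed.

Lemma card_level n m (X : {set {set 'I_n}}) :
  (forall B, B \in X -> #|B| = m) -> #|X| <= 'C(n, m).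
Proof.
move=> HX; rewrite -[n in 'C(n, _)]card_ord -card_draws.
apply: subset_leq_card; apply/subsetP => B HB; rewrite inE (HX _ HB) //.
Qed.

Lemma card_supsets n m (A : {set 'I_n}) : m <= n -> #|A| <= m ->
  #|[set B : {set 'I_n} | A \subset B & #|B| == m]| = 'C(n - #|A|, m - #|A|).
Proof.
move=> Hmn HAm.
have -> : [set B : {set 'I_n} | A \subset B & #|B| == m] =
   (@setC _) @: [set C : {set 'I_n} | C \subset ~: A & #|C| == n - m].
  apply/setP => B; rewrite inE; apply/andP/imsetP.
  - move=> [HAB /eqP HB]; exists (~: B); last by rewrite setCK.
    rewrite inE setCS HAB /= cardsCs setCK card_ord HB //.
  - move=> [C]; rewrite inE => /andP[HC /eqP HCc] ->.
    rewrite -setCS setCK HC; split => //.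
    have := cardsC C; rewrite card_ord HCc => E. apply/eqP; lia.
rewrite card_imset; last exact: setC_inj.
rewrite cards_draws.
have HcA := cardsC A; rewrite card_ord in HcA.
have -> : #|~: A| = n - #|A| by lia.
have -> : n - m = (n - #|A|) - (m - #|A|) by lia.
rewrite bin_sub //; lia.
Qed.

Lemma bin_id n k m : k <= m -> 'C(n,k) * 'C(n-k,m-k) = 'C(n,m) * 'C(m,k).
Proof.
move=> Hkm.
case: (leqP m n) => Hmn; last first.
  rewrite (bin_small Hmn) mul0n; case: (leqP k n) => Hkn; last by rewrite bin_small. by rewrite (@bin_small (n-k) (m-k)) ?muln0 //; lia.
have F := mul_bin_down.
have P : 0 < k`! * (m-k)`! * (n-m)`! by rewrite !muln_gt0 !fact_gt0.
apply/eqP; rewrite -(eqn_pmul2r P); apply/eqP.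
have e1 := bin_fact (leq_trans Hkm Hmn).
have e2 : 'C(n-k, m-k) * ((m-k)`! * (n-m)`!) = (n-k)`!.
  have Hle : m - k <= n - k by lia.
  have := @bin_fact (n-k) (m-k) Hle. by have -> : n - k - (m - k) = n - m by lia.
have e3 := bin_fact Hmn.
have e4 := bin_fact Hkm.
transitivity ('C(n,k) * (k`! * ('C(n-k,m-k) * ((m-k)`! * (n-m)`!)))); first lia.
rewrite e2 e1 -e3 -e4; lia.
Qed.

Lemma sum_b2n (T : finType) (S : {set T}) (P : pred T) :
  \sum_(x in S) (P x : nat) = #|[set x in S | P x]|.
Proof.
rewrite (eq_bigr (fun x => if P x then 1 else 0)); last by move=> x _; case: (P x).
rewrite -big_mkcondr sum1_card; apply: eq_card => x; rewrite !inE //.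
Qed.

Lemma core n k m (G H : {set {set 'I_n}}) : k <= m ->
 (forall A, A \in G -> #|A| = k) -> (forall B, B \in H -> #|B| = m) ->
 (forall A B, A \in G -> B \in H -> ~~ (A \subset B)) ->
 #|G| + #|H| <= maxn 'C(n,k) 'C(n,m).
Proof.
move=> Hkm HG HH HGH.
pose U := [set B : {set 'I_n} | (#|B| == m) && [exists A in G, A \subset B]].
have Hg : #|G| <= 'C(n,k) by apply: card_level.
have Hhu : #|H| + #|U| <= 'C(n,m).
  rewrite -cardsUI.
  have -> : H :&: U = set0.
    apply/setP => B; rewrite !inE; apply/negbTE/andP => [[HB /andP[_ /existsP[A /andP[HA HAB]]]]].
    by have := HGH _ _ HA HB; rewrite HAB.
  rewrite cards0 addn0; apply: card_level => B; rewrite !inE => /orP[/HH //| /andP[/eqP //]].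
have Hdc : #|G| * 'C(n-k, m-k) <= #|U| * 'C(m,k).
  case: (leqP k n) => Hkn; last first.
    by move: Hg; rewrite bin_small // leqn0 => /eqP ->.
  case: (leqP m n) => Hmn; last by rewrite (@bin_small (n-k) (m-k)) ?muln0 //; lia.
  have E : \sum_(A in G) \sum_(B in U) (A \subset B : nat) = \sum_(B in U) \sum_(A in G) (A \subset B : nat).
    exact: exchange_big.
  have L1 : \sum_(A in G) \sum_(B in U) (A \subset B : nat) = #|G| * 'C(n-k, m-k).
    rewrite -sum_nat_const; apply: eq_bigr => A HA.
    rewrite sum_b2n -(HG _ HA) -card_supsets ?(HG _ HA) //.
    apply: eq_card => B; rewrite !inE; apply/andP/andP => [[/andP[-> _] ->]//|[HAB HB]].
    by rewrite HB HAB; split => //; apply/existsP; exists A; rewrite HA.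
  have L2 : \sum_(B in U) \sum_(A in G) (A \subset B : nat) <= #|U| * 'C(m,k).
    rewrite -sum_nat_const; apply: leq_sum => B; rewrite inE => /andP[/eqP HB _].
    rewrite sum_b2n -HB -cards_draws; apply: subset_leq_card; apply/subsetP => A.
    by rewrite !inE => /andP[HA ->]; rewrite (HG _ HA) eqxx.
  by rewrite -L1 E.
have Hid := bin_id n Hkm.
have He : 0 < 'C(m,k) by rewrite bin_gt0.
exact: (arith Hdc Hhu Hg Hid He).
Qed.

Lemma sorted_le_last (x : nat) s : path ltn x s -> forall k, k \in x :: s -> k <= last x s.
Proof.
elim: s x => [|y s IH] x /=; first by move=> _ k; rewrite inE => /eqP ->.
move=> /andP[Hxy Hp] k; rewrite inE => /orP[/eqP ->|Hk].
  apply: leq_trans (ltnW Hxy) (IH _ Hp _ _); exact: mem_head.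
exact: IH.
Qed.

Lemma sorted_le_last0 K k : sorted ltn K -> k \in K -> k <= last 0 K.
Proof. case: K => [//|x s] /= Hp Hk; exact: sorted_le_last. Qed.

Lemma one_le_sum (x : nat) K : x \in K -> 1 <= \sum_(k <- K) (x == k : nat).
Proof.
elim: K => [//|y K IH]; rewrite inE big_cons => /orP[/eqP ->|Hx].
  by rewrite eqxx.
by apply: leq_trans (IH Hx) _; rewrite leq_addl.
Qed.

Lemma card_part n (F : {set {set 'I_n}}) (f : {set 'I_n} -> nat) K :
  (forall A, A \in F -> f A \in K) ->
  #|F| <= \sum_(k <- K) #|[set A in F | f A == k]|.
Proof.
move=> HF.
rewrite -sum1_card.
have -> : \sum_(k <- K) #|[set A in F | f A == k]| = \sum_(k <- K) \sum_(A in F) (f A == k : nat).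
  by apply: eq_bigr => k _; rewrite sum_b2n.
rewrite exchange_big /=; apply: leq_sum => A HA; exact: one_le_sum (HF _ HA).
Qed.

Theorem mainTheorem8 (p n : nat) (K L : seq nat) (F : {set {set 'I_n}}) :
  prime p ->
  0 < size K ->
  sorted ltn K ->
  all (fun k => k < p) K ->
  uniq L ->
  all (fun l => l < p) L ->
  all (fun l => l \notin K) L ->
  (forall A, A \in F -> (#|A| %% p) \in K) ->
  (forall A B, A \in F -> B \in F -> A != B -> (#|A :&: B| %% p) \in L) ->
  size L + last 0 K <= n ->
  n + 2 * size K <= 2 * size L ->
  p + head 0 K + 2 * size K <= size L + 2 + last 0 K ->
  [/\ #|F| <= size K * 'C(n, size L),
      size K * 'C(n, size L) <= \sum_(i < size K) 'C(n, size L - 2 * i)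
    & \sum_(i < size K) 'C(n, size L - 2 * i)
        = \sum_(j < 2 * size K) 'C(n.-1, size L - j)].
Proof.
move=> Hp Hr HK HKp HL HLp HLK HF HFL H1 H2 H3.
have Hp0 : 0 < p by apply: prime_gt0.
have HKu : uniq K by apply: (sorted_uniq ltn_trans ltnn).
have Hsr : size L + size K <= p.
  rewrite -size_cat -(size_iota 0 p); apply: uniq_leq_size.
    rewrite cat_uniq HL HKu andbT /=; apply/hasPn => k Hk; apply/negP => HkL.
    by move/allP: HLK => /(_ k HkL); rewrite Hk.
  move=> x; rewrite mem_cat mem_iota add0n => /orP[Hx|Hx].
    by move/allP: HLp => /(_ x Hx).
  by move/allP: HKp => /(_ x Hx).
have Hlast := sorted_le_last0 HK.
split.
- have HP := @card_part n F (fun A => #|A| %% p) K HF.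
  apply: (leq_trans HP).
  have -> : size K * 'C(n, size L) = \sum_(k <- K) 'C(n, size L).
    by rewrite big_const_seq count_predT iter_addn_0 mulnC.
  rewrite big_seq_cond [X in _ <= X]big_seq_cond; apply: leq_sum => k /andP[Hk _].
  have Hkl := Hlast k Hk.
  have Hkp : k < p by move/allP: HKp => /(_ k Hk).
  set Fk := [set A in F | #|A| %% p == k].
  have Hsize : forall A, A \in Fk -> #|A| = k \/ #|A| = k + p.
    move=> A; rewrite inE => /andP[_ /eqP HAk].
    have HAn : #|A| <= n by rewrite -[n in _ <= n]card_ord max_card.
    have Hq : #|A| %/ p < 2 by rewrite ltn_divLR //; lia.
    move: (divn_eq #|A| p) Hq; rewrite HAk.
    case: (#|A| %/ p) => [|[|q]] //= E _; [left|right]; lia.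
  pose G := [set A in Fk | #|A| == k].
  pose H := [set A in Fk | #|A| == k + p].
  have Hsub : #|Fk| <= #|G| + #|H|.
    rewrite -cardsUI; apply: leq_trans (leq_addr _ _); apply: subset_leq_card.
    apply/subsetP => A HA; have HS := Hsize A HA; move: HA HS; rewrite /G /H /Fk !inE.
    by move=> /andP[-> ->] [->|->]; rewrite eqxx ?orbT.
  apply: leq_trans Hsub _.
  have Hc := @core n k (k + p) G H (leq_addr _ _).
  apply: leq_trans (Hc _ _ _) _.
  + by move=> A; rewrite inE => /andP[_ /eqP].
  + by move=> A; rewrite inE => /andP[_ /eqP].
  + move=> A B; rewrite !inE => /andP[/andP[HAF _] /eqP HA] /andP[/andP[HBF _] /eqP HB].
    apply/negP => HAB.
    have HneAB : A != B by apply/negP => /eqP E; move: HA HB; rewrite E => ->; lia.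
    have := HFL A B HAF HBF HneAB; rewrite (setIidPl HAB) HA modn_small // => HkL.
    by move/allP: HLK => /(_ k HkL); rewrite Hk.
  + rewrite geq_max; apply/andP; split.
      apply: bin_le; lia.
    case: (leqP (k + p) n) => Hkpn; last by rewrite bin_small.
    rewrite -(bin_sub Hkpn); apply: bin_le; lia.
- have -> : size K * 'C(n, size L) = \sum_(i < size K) 'C(n, size L).
    by rewrite sum_nat_const card_ord.
  apply: leq_sum => i _.
  have Hi := ltn_ord i.
  have Hsn : size L <= n by lia.
  rewrite -(bin_sub Hsn); apply: bin_le; lia.
- apply: pascal_sum; lia.
Qed.
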